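(* Let $(\mathbf X,\mathbf Y)$ be a general correlated source such that $\{\frac1n\log\frac1{P_{X^n|Y^n}(X^n|Y^n)}\}_{n\ge1}$ satisfies Condition (W). Then for any $0<\varepsilon\le1$, $\{\frac1n\overline h^\varepsilon(X^n)\}_{n\ge1}$ also satisfies Condition (W).
   Context: A general correlated source $(\mathbf X,\mathbf Y)=\{(X^n,Y^n)\}_{n\ge1}$ is an arbitrary sequence of pairs of random variables on $\mathcal X^n\times\mathcal Y^n$, $\mathcal X,\mathcal Y$ finite or countably infinite (no structural assumptions; marginal probabilities positive). Logs base 2. For $x^n\in\mathcal X^n$ and $\varepsilon\in(0,1]$: $\overline h^\varepsilon(x^n)=\inf\{a\in\mathbb R:\sum_{y^n:\log(1/P_{X^n|Y^n}(x^n|y^n))>a}P_{Y^n|X^n}(y^n|x^n)\le\varepsilon\}$. A sequence of discrete real random variables $\{Z_n\}$ satisfies Condition (W) if: (i) there is $M<\infty$ with $\mathbb E[Z_n]<M$ for all $n$; and (ii) whenever events $\mathcal A_n$ satisfy $\Pr(\mathcal A_n)\to0$, then $\lim_n\mathbb E[|Z_n|\mathbf 1_{\mathcal A_n}]=0$. *)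

(* Defs.v *)
From HB Require Import structures.
From mathcomp Require Import all_boot all_order all_algebra.
From mathcomp Require Import all_classical all_reals all_analysis.
Set Implicit Arguments. Unset Strict Implicit. Unset Printing Implicit Defensive.
Import Order.TTheory GRing.Theory Num.Theory.
Import numFieldNormedType.Exports.
Local Open Scope classical_set_scope.
Local Open Scope ring_scope.

Definition log2 {R : realType} (x : R) : R := ln x / ln 2.

Definition condW {d} {R : realType} (T : nat -> measurableType d)
  (P : forall n, probability (T n) R) (Z : forall n, T n -> R) : Prop :=
  (exists M : R, forall n, (0 < n)%N -> ('E_(P n)[Z n] < M%:E)%E) /\
  (forall A : forall n, set (T n), (forall n, measurable (A n)) ->
     (fun n => (P n) (A n)) @ \oo --> 0%E ->
     (fun n => (\int[P n]_(w in A n) (`|Z n w|)%:E)%E) @ \oo --> 0%E).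

Section source.
Local Unset Implicit Arguments.
Context {d} {R : realType} {A B : countType} {T : nat -> measurableType d}
  (P : forall n, probability (T n) R)
  (X : forall n, T n -> n.-tuple A) (Y : forall n, T n -> n.-tuple B).

Definition pXY n (x : n.-tuple A) (y : n.-tuple B) : R :=
  fine ((P n) (X n @^-1` [set x] `&` Y n @^-1` [set y])).
Definition pX n (x : n.-tuple A) : R := fine ((P n) (X n @^-1` [set x])).
Definition pY n (y : n.-tuple B) : R := fine ((P n) (Y n @^-1` [set y])).

Definition pXgY n (x : n.-tuple A) (y : n.-tuple B) : R := pXY n x y / pY n y.
Definition pYgX n (y : n.-tuple B) (x : n.-tuple A) : R := pXY n x y / pX n x.

Definition hbar (eps : R) n (x : n.-tuple A) : R :=
  inf [set a : R | (\esum_(y in [set y : n.-tuple B | (log2 (pXgY n x y)^-1 > a)%R])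
                      (pYgX n y x)%:E <= eps%:E)%E].

Definition info_XgY n (w : T n) : R :=
  n%:R^-1 * log2 (pXgY n (X n w) (Y n w))^-1.
Definition hbar_rv (eps : R) n (w : T n) : R := n%:R^-1 * hbar eps n (X n w).

End source.

(* Main.v *)
Require Import Defs.
From HB Require Import structures.
From mathcomp Require Import all_boot all_order all_algebra.
From mathcomp Require Import all_classical all_reals all_analysis.
From mathcomp Require Import measurable_realfun ring lra.
Import Order.TTheory GRing.Theory Num.Theory.
Import numFieldNormedType.Exports.
Local Open Scope classical_set_scope.
Local Open Scope ring_scope.

Lemma integral_count_partition d (T : measurableType d) (R : realType)
  (mu : {measure set T -> \bar R}) (I : countType) (C : I -> set T) (f : T -> \bar R) :
  (forall i, measurable (C i)) -> (forall i j, i != j -> C i `&` C j = set0) ->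
  measurable_fun (\bigcup_i C i) f -> (forall x, (0 <= f x)%E) ->
  (\int[mu]_(x in \bigcup_i C i) f x = \esum_(i in [set: I]) \int[mu]_(x in C i) f x)%E.
Proof.
move=> mC dC mf f0.
pose F k := if @pickle_inv I k is Some i then C i else set0.
have pS k (i : I) : @pickle_inv I k = Some i -> pickle i = k.
  move=> h; have := @pickle_invK I; move=> /(_ k). rewrite h. done.
have FE : \bigcup_k F k = \bigcup_i C i.
  apply/seteqP; split=> x.
    by move=> [k _]; rewrite /F; case: pickle_inv => // i Cx; exists i.
  by move=> [i _ Cx]; exists (pickle i) => //; rewrite /F pickleK_inv.
have mF k : measurable (F k) by rewrite /F; case: pickle_inv.
have tF : trivIset setT F.
  move=> k l _ _; rewrite /F.
  case ek: (pickle_inv k) => [i|]; last by rewrite set0I => -[? []].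
  case el: (pickle_inv l) => [j|]; last by rewrite setI0 => -[? []].
  have [ij|ij] := eqVneq i j; first by move=> _; rewrite -(pS _ _ ek) -(pS _ _ el) ij.
  by rewrite dC // => -[? []].
rewrite -FE ge0_integral_bigcup //; last by rewrite FE.
rewrite nneseries_esumT; last by move=> k; apply: integral_ge0.
rewrite esum_mkcond.
transitivity (\esum_(k in [set: nat]) if k \in range (@pickle I) then \int[mu]_(x in F k) f x else 0)%E.
  apply: eq_esum => k _; rewrite in_setT; case: ifPn => // /negP kr.
  rewrite /F; case ek: (@pickle_inv I k) => [i|]; last by rewrite integral_set0.
  by exfalso; apply: kr; rewrite inE; exists i => //; apply: pS.
rewrite -esum_mkcond esum_image; last by move=> i j _ _; exact: (pcan_inj pickleK_inv).
by apply: eq_esum => i _; rewrite /F pickleK_inv.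
Qed.

Lemma measurable_fun_count d (T : measurableType d) (R : realType) (I : countType)
  (g : T -> I) (f : I -> \bar R) (D : set T) :
  measurable D ->
  (forall i, measurable (g @^-1` [set i])) -> measurable_fun D (fun w => f (g w)).
Proof.
move=> mD mg _ Y mY.
have -> : (fun w => f (g w)) @^-1` Y = \bigcup_i (if f i \in Y then g @^-1` [set i] else set0).
  apply/seteqP; split=> w /=.
    by move=> Yw; exists (g w) => //; rewrite ifT ?inE.
  by move=> [i _]; case: ifPn => // /[!inE] Yi /= ->.
apply: measurableI => //; apply: countable_bigcupT_measurable.
  exact: countableP.
by move=> i; case: ifPn.
Qed.

Lemma esumZl (R : realType) (I : choiceType) (S : set I) (r : R) (a : I -> \bar R) :
  (0 <= r) -> (forall i, (0 <= a i)%E) ->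
  (\esum_(i in S) (r%:E * a i) = r%:E * \esum_(i in S) a i)%E.
Proof.
move=> r0 a0; rewrite /esum -ereal_supZl //; last first.
  by apply/set0P; exists 0%E; exists set0; [exact: fsets_set0|rewrite fsbig_set0].
rewrite image_comp; congr ereal_sup; apply: eq_imagel => F _ /=.
by rewrite ge0_mule_fsumr.
Qed.

Lemma q_cvg (R : realType) (p : nat -> R) : p @ \oo --> 0 ->
  (fun n => Num.sqrt (p n + n.+1%:R^-1)) @ \oo --> 0.
Proof.
move=> pc; rewrite -sqrtr0.
have h : (fun n => p n + n.+1%:R^-1) @ \oo --> (0 : R).
  rewrite -[0 : R]addr0; apply: cvgD => //; exact: cvg_harmonic.
exact: (continuous_cvg _ (@sqrt_continuous R 0) h).
Qed.

Section main.
Context (d : measure_display) (R : realType) (A B : countType)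
  (T : nat -> measurableType d) (P : forall n, probability (T n) R)
  (X : forall n, T n -> n.-tuple A) (Y : forall n, T n -> n.-tuple B)
  (mX : forall n (x : n.-tuple A), measurable (X n @^-1` [set x]))
  (mY : forall n (y : n.-tuple B), measurable (Y n @^-1` [set y]))
  (pX_gt0 : forall n (x : n.-tuple A), 0 < pX P X n x)
  (pY_gt0 : forall n (y : n.-tuple B), 0 < pY P Y n y).

Local Notation pXY := (pXY P X Y).
Local Notation pX := (pX P X).
Local Notation pY := (pY P Y).
Local Notation pXgY := (pXgY P X Y).
Local Notation pYgX := (pYgX P X Y).

Let CXY n x y := X n @^-1` [set x] `&` Y n @^-1` [set y].

Let mCXY n x y : measurable (CXY n x y).
Proof. exact: measurableI. Qed.

Let finP n (S : set (T n)) : measurable S -> P n S = (fine (P n S))%:E.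
Proof. by move=> mS; rewrite fineK //; apply: fin_num_measure. Qed.

Let PXY n x y : P n (CXY n x y) = (pXY n x y)%:E.
Proof. by rewrite finP //; apply: mCXY. Qed.

Let PX n x : P n (X n @^-1` [set x]) = (pX n x)%:E.
Proof. by rewrite finP //; apply: mX. Qed.

Let pXY_ge0 n x y : 0 <= pXY n x y.
Proof. by apply: fine_ge0; apply: measure_ge0. Qed.

Let pXY_leY n x y : pXY n x y <= pY n y.
Proof.
rewrite -lee_fin -PXY /Defs.pY -finP //; apply: le_measure; rewrite ?inE //.
all: first [exact: mCXY | exact: mY | by move=> w []].
Qed.

Let pXgY01 n x y : 0 <= pXgY n x y <= 1.
Proof.
rewrite /Defs.pXgY; apply/andP; split.
  by rewrite divr_ge0 // ltW.
by rewrite ler_pdivrMr // mul1r; apply: pXY_leY.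
Qed.

Definition L n x y := log2 (pXgY n x y)^-1.

Let L_ge0 n x y : 0 <= L n x y.
Proof.
rewrite /L /log2; apply: divr_ge0; last by apply: ltW; apply: ln_gt0; rewrite ltr1n.
have /andP[p0 p1] := pXgY01 n x y.
have [->|pn0] := eqVneq (pXgY n x y) 0; first by rewrite invr0 ln0.
apply: ln_ge0; rewrite invr_ge1 // ?unitfE //; by rewrite lt_def pn0.
Qed.


Let mfXY n (f : n.-tuple A -> n.-tuple B -> \bar R) (D : set (T n)) :
  measurable D -> measurable_fun D (fun w => f (X n w) (Y n w)).
Proof.
move=> mD.
apply: (@measurable_fun_count _ _ _ _ (fun w => (X n w, Y n w)) (fun p => f p.1 p.2)) => //.
move=> [x y]; have -> : (fun w => (X n w, Y n w)) @^-1` [set (x, y)] = CXY n x y.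
  by apply/seteqP; split=> w /=; [case=> <- <-|case=> /= -> ->].
exact: mCXY.
Qed.

Let mfX n (g : n.-tuple A -> \bar R) (D : set (T n)) :
  measurable D -> measurable_fun D (fun w => g (X n w)).
Proof. by move=> mD; apply: measurable_fun_count. Qed.

Let mfY n (g : n.-tuple B -> \bar R) (D : set (T n)) :
  measurable D -> measurable_fun D (fun w => g (Y n w)).
Proof. by move=> mD; apply: measurable_fun_count. Qed.

Lemma int_X n (x : n.-tuple A) (h : n.-tuple B -> \bar R) : (forall y, 0 <= h y)%E ->
  (\int[P n]_(w in X n @^-1` [set x]) h (Y n w) =
   \esum_(y in [set: n.-tuple B]) h y * (pXY n x y)%:E)%E.
Proof.
move=> h0.
have -> : X n @^-1` [set x] = \bigcup_y CXY n x y.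
  by apply/seteqP; split=> w /=; [move=> Xw; exists (Y n w)|case=> y _ []].
rewrite integral_count_partition //.
- apply: eq_esum => y _; rewrite -PXY -integral_cst; last exact: mCXY.
  apply: eq_integral => w /set_mem -[_ /= e]; by rewrite /cst e.
- move=> y y' yy'; apply/seteqP; split=> // w [[_ e1] [_ e2]]; move/eqP: yy'; apply.
  by rewrite -e1 -e2.
- apply: mfY; apply: countable_bigcupT_measurable; first exact: countableP.
  by move=> y; exact: mCXY.
Qed.

Lemma int_T_X n (g : n.-tuple A -> \bar R) : (forall x, 0 <= g x)%E ->
  (\int[P n]_w g (X n w) = \esum_(x in [set: n.-tuple A]) g x * (pX n x)%:E)%E.
Proof.
move=> g0.
have -> : [set: T n] = \bigcup_x X n @^-1` [set x].
  by apply/seteqP; split=> w // _; exists (X n w).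
rewrite integral_count_partition //.
- apply: eq_esum => x _; rewrite -PX -integral_cst //.
  by apply: eq_integral => w /[!inE] /= ->.
- move=> x x' xx'; apply/seteqP; split=> // w [e1 e2]; move/eqP: xx'; apply.
  by rewrite -e1 -e2.
- apply: mfX; apply: countable_bigcupT_measurable; [exact: countableP|exact: mX].
Qed.

Lemma int_T_XY n (f : n.-tuple A -> n.-tuple B -> \bar R) : (forall x y, 0 <= f x y)%E ->
  (\int[P n]_w f (X n w) (Y n w) =
   \esum_(x in [set: n.-tuple A]) \esum_(y in [set: n.-tuple B]) f x y * (pXY n x y)%:E)%E.
Proof.
move=> f0.
have -> : [set: T n] = \bigcup_x X n @^-1` [set x].
  by apply/seteqP; split=> w // _; exists (X n w).
rewrite integral_count_partition //.
- apply: eq_esum => x _; rewrite -int_X //.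
  by apply: eq_integral => w /[!inE] /= ->.
- move=> x x' xx'; apply/seteqP; split=> // w [e1 e2]; move/eqP: xx'; apply.
  by rewrite -e1 -e2.
- apply: mfXY; apply: countable_bigcupT_measurable; [exact: countableP|exact: mX].
Qed.


Let pX_neq0 n x : pX n x != 0.
Proof. by rewrite gt_eqF. Qed.

Let pYgX_ge0 n y x : 0 <= pYgX n y x.
Proof. by rewrite /Defs.pYgX divr_ge0 // ltW. Qed.

Lemma sum_pXY n x (c : R) : 0 <= c ->
  (\esum_(y in [set: n.-tuple B]) (c * pXY n x y)%:E = (c * pX n x)%:E)%E.
Proof.
move=> c0; have /= h := int_X n x (fun=> c%:E) (fun _ => c0).
rewrite EFinM -PX -integral_cst; last exact: mX.
rewrite /cst h; by apply: eq_esum => y _; rewrite EFinM.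
Qed.

Lemma sum_pYgX n x : (\esum_(y in [set: n.-tuple B]) (pYgX n y x)%:E = 1)%E.
Proof.
rewrite -[RHS](_ : ((pX n x)^-1 * pX n x)%:E = 1)%E; last by rewrite mulVf.
rewrite -sum_pXY ?invr_ge0 ?ltW //; apply: eq_esum => y _.
by rewrite /Defs.pYgX mulrC.
Qed.

Lemma esum_subset (I : choiceType) (S1 S2 : set I) (a : I -> \bar R) :
  S1 `<=` S2 -> (forall i, 0 <= a i)%E ->
  (\esum_(i in S1) a i <= \esum_(i in S2) a i)%E.
Proof.
move=> S12 a0; rewrite esum_mkcond [X in (_ <= X)%E]esum_mkcond.
apply: le_esum => i _; case: ifPn => [/set_mem/S12 iS2|_].
  by rewrite ifT // inE.
by case: ifP.
Qed.

Definition gL n x : \bar R :=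
  \esum_(y in [set: n.-tuple B]) (pYgX n y x * L n x y)%:E.
Definition G n x : \bar R := ((n%:R^-1)%:E * gL n x)%E.

Let gL_ge0 n x : (0 <= gL n x)%E.
Proof. by apply: esum_ge0 => y _; rewrite lee_fin mulr_ge0. Qed.

Let G_ge0 n x : (0 <= G n x)%E.
Proof. by rewrite /G mule_ge0 // lee_fin invr_ge0. Qed.

Lemma Id n (S : set (n.-tuple A)) :
  (\int[P n]_w (if X n w \in S then G n (X n w) else 0) =
   \int[P n]_w (if X n w \in S then (info_XgY P X Y n w)%:E else 0))%E.
Proof.
rewrite (int_T_X n (fun x => if x \in S then G n x else 0)); last first.
  by move=> x; case: ifP.
rewrite (int_T_XY n (fun x y => if x \in S then (n%:R^-1 * L n x y)%:E else 0)); last first.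
  by move=> x y; case: ifP => // _; rewrite lee_fin mulr_ge0 // invr_ge0.
apply: eq_esum => x _; case: ifPn => xS.
  rewrite /G muleAC /gL -EFinM -esumZl; last 2 first.
  - by rewrite mulr_ge0 // ?invr_ge0 // ltW.
  - by move=> y; rewrite lee_fin mulr_ge0.
  apply: eq_esum => y _; rewrite -!EFinM; congr EFin.
  rewrite /Defs.pYgX; move: (n%:R^-1) => a; field; exact: pX_neq0.
by rewrite mul0e esum1 // => y _; rewrite mul0e.
Qed.


Lemma hbar_ge0 (eps : R) n x : 0 < eps -> eps <= 1 -> 0 <= hbar P X Y eps n x.
Proof.
move=> e0 e1; rewrite /hbar.
set E := [set a : R | _].
have [[[a0 Ea0] hlb]|nhE] := pselect (has_inf E); last by rewrite inf_out.
have [eps1|epslt1] := eqVneq eps 1.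
  exfalso; case: hlb => b lbb.
  have : E (b - 1).
    rewrite /E /= eps1 -(sum_pYgX n x); apply: esum_subset => // y.
    by rewrite lee_fin.
  by move/lbb => h; lra.
apply: lb_le_inf; first by exists a0.
move=> a Ea; rewrite leNgt; apply/negP => a_lt0.
have : (1 <= eps%:E)%E.
  rewrite -(sum_pYgX n x); apply: le_trans Ea; apply: esum_subset.
    by move=> y _ /=; apply: (lt_le_trans a_lt0); exact: (L_ge0 n x y).
  by move=> y; rewrite lee_fin.
rewrite lee_fin => h; move/eqP: epslt1; apply; apply/eqP; by rewrite eq_le e1 h.
Qed.

Lemma hbar_le (eps : R) n x g : 0 < eps -> gL n x = g%:E ->
  hbar P X Y eps n x <= (g + 1) / eps.
Proof.
move=> e0 gE; rewrite /hbar.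
set E := [set a : R | _].
have g0 : 0 <= g by rewrite -lee_fin -gE.
set a0 := (g + 1) / eps.
have a0_gt0 : 0 < a0 by rewrite divr_gt0 // ltr_wpDl.
have Ea0 : E a0.
  rewrite /E /=.
  apply: (@le_trans _ _ (\esum_(y in [set y | (a0 < L n x y)%R]) ((a0^-1)%:E * (pYgX n y x * L n x y)%:E))%E).
    apply: le_esum => y /= ay; rewrite -EFinM lee_fin.
    rewrite mulrCA -[leLHS]mulr1 ler_wpM2l //.
    by rewrite ler_pdivlMl // mulr1 ltW.
  rewrite esumZl; last 2 first.
  - by rewrite invr_ge0 ltW.
  - by move=> y; rewrite lee_fin mulr_ge0.
  apply: (@le_trans _ _ ((a0^-1)%:E * gL n x))%E.
    apply: lee_wpmul2l; first by rewrite lee_fin invr_ge0 ltW.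
    by apply: esum_subset => // y; rewrite lee_fin mulr_ge0.
  rewrite gE -EFinM lee_fin /a0 invf_div.
  rewrite mulrAC ler_pdivrMr; [nra|lra].
have [[_ hlb]|nhE] := pselect (has_inf E); first exact: ge_inf hlb _ Ea0.
by rewrite inf_out // ltW.
Qed.


Lemma H_ge0 (eps : R) n w : 0 < eps -> eps <= 1 -> 0 <= hbar_rv P X Y eps n w.
Proof.
by move=> e0 e1; rewrite /hbar_rv mulr_ge0 ?invr_ge0 // hbar_ge0.
Qed.

Lemma H_le (eps : R) n w : (0 < n)%N -> 0 < eps ->
  ((hbar_rv P X Y eps n w)%:E <= (eps^-1)%:E * (G n (X n w) + 1))%E.
Proof.
move=> n0 e0; rewrite /G /hbar_rv.
have k0 : 0 < n%:R^-1 :> R by rewrite invr_gt0 ltr0n.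
have k1 : n%:R^-1 <= 1 :> R by rewrite invf_le1 ?ltr0n // ler1n.
have e'0 : 0 < eps^-1 by rewrite invr_gt0.
have := gL_ge0 n (X n w).
case E: (gL n (X n w)) => [g| |] // g0.
- have h := hbar_le eps n (X n w) g e0 E.
  rewrite -EFinM lee_fin.
  move: h; set hb := hbar _ _ _ _ _ _.
  move: (n%:R^-1) k0 k1 => k k0 k1.
  rewrite lee_fin in g0.
  move: (eps^-1) e'0 => e' e'0 h.
  have h1 : k * hb <= k * ((g + 1) * e') by rewrite ler_wpM2l // ltW.
  apply: (le_trans h1); nra.
- by rewrite gt0_muley ?lte_fin // addye // gt0_muley ?lte_fin // leey.
Qed.


Let Z_ge0 n w : 0 <= info_XgY P X Y n w.
Proof. by rewrite /info_XgY mulr_ge0 ?invr_ge0 //; apply: L_ge0. Qed.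

Let mZ n (D : set (T n)) : measurable D ->
  measurable_fun D (fun w => (info_XgY P X Y n w)%:E).
Proof. by move=> mD; exact: (@mfXY n (fun x y => (n%:R^-1 * L n x y)%:E) D mD). Qed.

Let mXS n (S : set (n.-tuple A)) : measurable (X n @^-1` S).
Proof.
have -> : X n @^-1` S = \bigcup_x (if x \in S then X n @^-1` [set x] else set0).
  apply/seteqP; split=> w /=.
    by move=> Sw; exists (X n w) => //; rewrite ifT // inE.
  by move=> [x _]; case: ifPn => // /[!inE] Sx /= ->.
apply: countable_bigcupT_measurable; first exact: countableP.
by move=> x; case: ifPn => _; [exact: mX|exact: measurable0].
Qed.

Lemma intG_intZ n :
  (\int[P n]_w G n (X n w) = \int[P n]_w (info_XgY P X Y n w)%:E)%E.
Proof.
have := Id n setT.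
rewrite (eq_integral (fun w => G n (X n w))); last by move=> w _; rewrite in_setT.
move=> ->; apply: eq_integral => w _; by rewrite in_setT.
Qed.

Lemma intG_B n (S : set (n.-tuple A)) :
  (\int[P n]_w (if X n w \in S then G n (X n w) else 0) =
   \int[P n]_(w in X n @^-1` S) (`|info_XgY P X Y n w|)%:E)%E.
Proof.
rewrite Id [RHS]integral_mkcond; apply: eq_integral => w _.
rewrite patchE; have -> : (w \in X n @^-1` S) = (X n w \in S) by [].
by case: ifP => // _; rewrite ger0_norm.
Qed.


Lemma main_sec (HW : condW P (info_XgY P X Y)) (eps : R) (e0 : 0 < eps)
  (e1 : eps <= 1) : condW P (hbar_rv P X Y eps).
Proof.
have [[M HM] HUI] := HW.
have mH n (D : set (T n)) : measurable D ->
    measurable_fun D (fun w => (hbar_rv P X Y eps n w)%:E).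
  by move=> mD; exact: (@mfX n (fun x => (n%:R^-1 * hbar P X Y eps n x)%:E) D mD).
have intZ n : (0 < n)%N -> (\int[P n]_w (info_XgY P X Y n w)%:E < M%:E)%E.
  by move=> n0; have := HM n n0; rewrite unlock.
have ie0 : 0 <= eps^-1 by rewrite invr_ge0 ltW.
split.
  exists (eps^-1 * (M + 1) + 1) => n n0; rewrite unlock.
  apply: (@le_lt_trans _ _ (eps^-1 * (M + 1))%:E); last by rewrite lte_fin ltrDl.
  apply: (@le_trans _ _ (\int[P n]_w ((eps^-1)%:E * (G n (X n w) + 1)))%E).
    apply: ge0_le_integral => //; try solve [by move=> w _; rewrite lee_fin H_ge0
      | exact: mH | exact: (@mfX n (fun x => ((eps^-1)%:E * (G n x + 1))%E))
      | by move=> w _; apply: H_le].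
  rewrite ge0_integralZl //; try solve [exact: (@mfX n (fun x => (G n x + 1)%E))
    | by move=> w _; rewrite adde_ge0 | by rewrite lee_fin].
  rewrite ge0_integralD //; try solve [by move=> w _ | exact: (@mfX n (fun x => G n x))
    | exact: measurable_cst].
  rewrite intG_intZ integral_cst // [X in (_ + X)%E](_ : _ = 1%E); last by rewrite mul1e; exact: probability_setT.
  rewrite EFinM lee_wpmul2l ?lee_fin // EFinD leeD //.
  exact: ltW (intZ n n0).
move=> Aset mA PA0.
set p := fun n => fine (P n (Aset n)).
have p0 n : 0 <= p n by apply: fine_ge0; apply: measure_ge0.
have PA n : P n (Aset n) = (p n)%:E by apply: finP.
have pc : p @ \oo --> 0 by apply: (@fine_cvg _ _ _ _ _ 0).
set q := fun n => Num.sqrt (p n + n.+1%:R^-1).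
have q_gt0 n : 0 < q n by rewrite sqrtr_gt0 ltr_wpDl.
have qc : q @ \oo --> 0 by apply: q_cvg.
set K := fun n => (q n)^-1.
have K_gt0 n : 0 < K n by rewrite invr_gt0.
have qK n : q n * K n = 1 by rewrite mulfV // gt_eqF.
have pqq n : p n <= q n * q n.
  by rewrite -expr2 sqr_sqrtr ?addr_ge0 // lerDl.
set S := fun n => [set x : n.-tuple A | ((K n)%:E < G n x)%E].
set Bn := fun n => X n @^-1` S n.
have PB n : (0 < n)%N -> (P n (Bn n) <= (M * q n)%:E)%E.
  move=> n0; have mB := mXS n (S n).
  have h1 : ((K n)%:E * P n (Bn n) <= M%:E)%E.
    rewrite -integral_cst //.
    apply: (@le_trans _ _ (\int[P n]_(w in Bn n) G n (X n w))%E).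
      apply: ge0_le_integral => //; try solve [by move=> w _; rewrite lee_fin ltW
        | exact: measurable_cst | exact: (@mfX n (fun x => G n x))
        | by move=> w /= h; apply: ltW].
    apply: (@le_trans _ _ (\int[P n]_w G n (X n w))%E).
      apply: ge0_subset_integral => //.
      exact: (@mfX n (fun x => G n x)).
    rewrite intG_intZ; exact: ltW (intZ n n0).
  move: h1; rewrite (@finP n _ mB) -EFinM !lee_fin => h1.
  have := ler_wpM2l (ltW (q_gt0 n)) h1.
  by rewrite mulrA qK mul1r mulrC.
have PB0 : (fun n => P n (Bn n)) @ \oo --> 0%E.
  apply: (@squeeze_cvge _ _ _ _ (cst 0%E) _ (fun n => (M * q n)%:E)).
  - near=> n; rewrite measure_ge0 /= PB //.
    by near: n; exists 1%N.
  - exact: cvg_cst.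
  - apply/fine_cvgP; split; first by near=> n.
    rewrite -(mulr0 M); apply: cvgM => //; exact: cvg_cst.
have HZ := HUI Bn (fun n => mXS n (S n)) PB0.
have bound n : (0 < n)%N ->
  (\int[P n]_(w in Aset n) (`|hbar_rv P X Y eps n w|)%:E <=
   (eps^-1)%:E * (\int[P n]_(w in Bn n) (`|info_XgY P X Y n w|)%:E + (q n + p n)%:E))%E.
  move=> n0; have mA0 := mA n.
  set Gp := fun x : n.-tuple A => if x \in S n then G n x else 0%E.
  have Gp0 x : (0 <= Gp x)%E by rewrite /Gp; case: ifP.
  apply: (@le_trans _ _ (\int[P n]_(w in Aset n) ((eps^-1)%:E * (Gp (X n w) + (K n + 1)%:E)))%E).
    apply: ge0_le_integral => //; try solve [by move=> w _
      | exact: (@mfX n (fun x => (`|n%:R^-1 * hbar P X Y eps n x|)%:E))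
      | exact: (@mfX n (fun x => ((eps^-1)%:E * (Gp x + (K n + 1)%:E))%E))].
    move=> w _; rewrite ger0_norm ?H_ge0 //.
    apply: (le_trans (H_le eps n w n0 e0)).
    apply: lee_wpmul2l; first by rewrite lee_fin.
    rewrite /Gp; case: ifPn => [_|].
      by apply: leeD => //; rewrite lee_fin lerDr ltW.
    rewrite notin_setE /S /= => /negP; rewrite -leNgt => GK.
    by rewrite add0e EFinD leeD.
  rewrite ge0_integralZl //; try solve [exact: (@mfX n (fun x => (Gp x + (K n + 1)%:E)%E))
    | by move=> w _; rewrite adde_ge0 // lee_fin addr_ge0 // ltW | by rewrite lee_fin].
  rewrite ge0_integralD //; try solve [by move=> w _ | exact: (@mfX n Gp)
    | by move=> w _; rewrite lee_fin addr_ge0 // ltW | exact: measurable_cst].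
  rewrite integral_cst // [X in (_ + X)%E](_ : _ = ((K n + 1) * p n)%:E); last first.
    by rewrite EFinM; congr (_ * _)%E; exact: PA.
  apply: lee_wpmul2l; first by rewrite lee_fin.
  apply: leeD.
    rewrite -intG_B; apply: ge0_subset_integral => //.
    exact: (@mfX n Gp).
  rewrite lee_fin mulrDl mul1r lerD2r.
  have := ler_wpM2l (ltW (K_gt0 n)) (pqq n).
  by rewrite [K n * (_ * _)]mulrA (mulrC (K n) (q n)) qK mul1r.
apply: (@squeeze_cvge _ _ _ _ (cst 0%E) _ (fun n =>
   ((eps^-1)%:E * (\int[P n]_(w in Bn n) (`|info_XgY P X Y n w|)%:E + (q n + p n)%:E))%E)).
- near=> n; rewrite integral_ge0 /=; last by move=> w _.
  by rewrite bound //; near: n; exists 1%N.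
- exact: cvg_cst.
- rewrite -(mule0 (eps^-1)%:E); apply: cvgeZl => //.
  rewrite -[0%E]adde0; apply: cvgeD => //.
  apply/fine_cvgP; split; first by near=> n.
  rewrite -[0 : R]addr0; apply: cvgD => //.
Unshelve. all: by end_near.
Qed.

End main.

Theorem lemma2 (d : measure_display) (R : realType) (A B : countType)
  (T : nat -> measurableType d) (P : forall n, probability (T n) R)
  (X : forall n, T n -> n.-tuple A) (Y : forall n, T n -> n.-tuple B)
  (mX : forall n (x : n.-tuple A), measurable (X n @^-1` [set x]))
  (mY : forall n (y : n.-tuple B), measurable (Y n @^-1` [set y]))
  (pX_gt0 : forall n (x : n.-tuple A), 0 < pX P X n x)
  (pY_gt0 : forall n (y : n.-tuple B), 0 < pY P Y n y)
  (HW : condW P (info_XgY P X Y)) (eps : R) (eps_gt0 : 0 < eps) (eps_le1 : eps <= 1) :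
  condW P (hbar_rv P X Y eps).

Proof. exact: (@main_sec d R A B T P X Y mX mY pX_gt0 pY_gt0 HW eps eps_gt0 eps_le1). Qed.
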